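(* Let $M$ be a matroid, $\psi\colon E(M)\to\Gamma$ a labeling to an abelian group, and $F\subseteq\Gamma$ with $|F|=2$. If $M$ has at least one $F$-avoiding basis, then for every basis $B$ of $M$ there exists an $F$-avoiding basis $B^*$ with $|B\setminus B^*|\le2$.
   Context: $\psi(S):=\sum_{x\in S}\psi(x)$; a basis $B$ is $F$-avoiding if $\psi(B)\notin F$. *)

(* Defs.v *)
From HB Require Import structures.
From mathcomp Require Import all_boot all_algebra.
Set Implicit Arguments. Unset Strict Implicit. Unset Printing Implicit Defensive.
Import GRing.Theory.
Local Open Scope ring_scope.

Definition matroid_bases (T : finType) (bases : {set {set T}}) : Prop :=
  (exists B, B \in bases) /\
  (forall B1 B2, B1 \in bases -> B2 \in bases ->
     forall x, x \in B1 :\: B2 ->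
       exists2 y, y \in B2 :\: B1 & (B1 :\ x) :|: [set y] \in bases).

Record matroid (T : finType) := Matroid {
  bases : {set {set T}};
  basesP : matroid_bases bases
}.

Definition psiS (T : finType) (G : zmodType) (psi : T -> G) (S : {set T}) : G :=
  \sum_(x in S) psi x.

Definition F_avoiding (T : finType) (G : zmodType) (psi : T -> G)
  (F : seq G) (B : {set T}) : bool :=
  psiS psi B \notin F.

(* Main.v *)
Require Import Defs.
From mathcomp Require Import all_boot all_algebra.
Set Implicit Arguments. Unset Strict Implicit.

Definition trip : seq (seq nat) := [:: [::0;1;2];[::0;1;3];[::0;1;4];[::0;1;5];[::0;2;3];[::0;2;4];[::0;2;5];[::0;3;4];[::0;3;5];[::0;4;5];[::1;2;3];[::1;2;4];[::1;2;5];[::1;3;4];[::1;3;5];[::1;4;5];[::2;3;4];[::2;3;5];[::2;4;5];[::3;4;5]].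

Definition exch (t1 : seq nat) (x y : nat) := sort leq (rcons (rem x t1) y).

Definition genc : seq (nat * nat * seq nat) :=
  flatten [seq flatten [seq [seq (index t1 trip, index t2 trip,
      [seq index (exch t1 x y) trip | y <- t2 & y \notin t1]) | x <- t1 & x \notin t2]
    | t2 <- trip] | t1 <- trip].

Definition lk (bv : seq bool) i := nth false bv i.

Fixpoint lall (p : nat -> bool) (s : seq nat) := if s is x :: s' then (if p x then lall p s' else false) else true.
Fixpoint lhas (p : nat -> bool) (s : seq nat) := if s is x :: s' then (if p x then true else lhas p s') else false.
Fixpoint okB2 (cs : seq (nat * nat * seq nat)) (bv : seq bool) :=
  if cs is c :: cs' then
    (if lk bv c.1.1 then (if lk bv c.1.2 then (if lhas (lk bv) c.2 then okB2 cs' bv else false) else okB2 cs' bv) else okB2 cs' bv)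
  else true.
Definition perms3 : seq (seq nat) := [:: [::0;1;2];[::0;2;1];[::1;0;2];[::1;2;0];[::2;0;1];[::2;1;0]].
Definition rels : seq (seq nat) :=
  flatten [seq [seq p ++ map (addn 3) q ++ [:: 6] | q <- perms3] | p <- perms3].
Definition relab (r : seq nat) (t : seq nat) := sort leq (map (nth 0 r) t).
Definition patP : seq (seq nat) := [:: [::0;1;2];[::0;1;5];[::0;2;4];[::0;4;5];[::1;2;3];[::1;3;5];[::2;3;4];[::3;4;5]].
Definition patK : seq (seq nat) :=
  [seq t <- trip | t \notin [:: [::0;1;4];[::0;2;3];[::1;3;5];[::2;4;5]]].
Definition gpats := [seq [seq index (relab r t) trip | t <- patP] | r <- rels] ++ [seq [seq index (relab r t) trip | t <- patK] | r <- rels].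
Definition gpl := Eval vm_compute in gpats.
Fixpoint haspat (ps : seq (seq nat)) (bv : seq bool) := if ps is p :: ps' then (if lall (lk bv) p then true else haspat ps' bv) else false.
Definition test cs ps (bv : seq bool) :=
  if lk bv 0 then if lk bv 19 then if okB2 cs bv then haspat ps bv else true else true else true.
Fixpoint chk cs ps (n : nat) (pre : seq bool) : bool :=
  match n with 0 => test cs ps pre | n'.+1 => if chk cs ps n' (rcons pre true) then chk cs ps n' (rcons pre false) else false end.
Definition cslit := Eval vm_compute in genc.


Lemma genc_lit : genc = cslit. Proof. by vm_compute. Qed.
Lemma gpl_eq : gpl = gpats. Proof. by vm_compute. Qed.

Lemma lall_all p s : lall p s = all p s.
Proof. by elim: s => //= x s IH; rewrite IH; case: (p x). Qed.
Lemma lhas_has p s : lhas p s = has p s.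
Proof. by elim: s => //= x s IH; rewrite IH; case: (p x). Qed.

Lemma okB2_spec cs bv :
  (forall c, c \in cs -> lk bv c.1.1 -> lk bv c.1.2 -> has (lk bv) c.2) -> okB2 cs bv.
Proof.
elim: cs => //= c cs IH H.
have IH' : okB2 cs bv by apply: IH => c' hc'; apply: H; rewrite inE hc' orbT.
case E1: (lk bv c.1.1) => //; case E2: (lk bv c.1.2) => //.
by rewrite lhas_has (H c (mem_head _ _) E1 E2).
Qed.

Lemma haspat_spec ps bv : haspat ps bv -> exists2 p, p \in ps & all (lk bv) p.
Proof.
elim: ps => //= p ps IH; rewrite lall_all.
case E: (all (lk bv) p).
  by move=> _; exists p; rewrite ?mem_head.
move/IH => [p' hp' hp'']; exists p' => //; by rewrite inE hp' orbT.
Qed.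

Lemma chk_spec cs ps n pre : chk cs ps n pre -> forall l, size l = n -> test cs ps (pre ++ l).
Proof.
elim: n pre => [|n IH] pre /=; first by move=> h [|//] _; rewrite cats0.
case E: (chk cs ps n (rcons pre true)) => // h [//|b l] /= [sl].
rewrite -cat_rcons; case: b.
  by apply: IH.
by apply: IH.
Qed.

Lemma chk_ok : chk cslit gpl 20 [::].
Proof. vm_compute. reflexivity. Qed.

Lemma brute bv : size bv = 20 -> lk bv 0 -> lk bv 19 -> okB2 cslit bv ->
  exists2 p, p \in gpl & all (lk bv) p.
Proof.
move=> sb h0 h19 hok; apply: haspat_spec.
have := chk_spec chk_ok sb; rewrite /= /test h0 h19 hok.
by [].
Qed.

Section Grp.
Import GRing.Theory.
Local Open Scope ring_scope.
Variable G : zmodType.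

Lemma addcan (x y z : G) : x + y = z + y -> x = z.
Proof. exact: addIr. Qed.

Lemma part_core (y y' x a b cc ab ac bc : G) : y != y' ->
  let P z := (z == y) || (z == y') in
  P a -> P b -> P cc -> P ab -> P ac -> P bc ->
  x + y = a + bc -> x + y = b + ac -> x + y = cc + ab ->
  ab + y = a + b -> ac + y = a + cc -> bc + y = b + cc -> P x.
Proof.
move=> nyy' P Pa Pb Pc Pab Pac Pbc e1 e2 e3 e4 e5 e6.
case/orP: Pa => /eqP Ea.
  by subst a; have -> : x = bc by apply: (@addIr _ y); rewrite e1 addrC.
case/orP: Pb => /eqP Eb.
  by subst b; have -> : x = ac by apply: (@addIr _ y); rewrite e2 addrC.
case/orP: Pc => /eqP Ec.
  by subst cc; have -> : x = ab by apply: (@addIr _ y); rewrite e3 addrC.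
subst a b cc.
case/orP: Pab => /eqP Eab; last first.
  by subst ab; move/addrI: e4 => E; rewrite E eqxx in nyy'.
subst ab.
have Ebc : bc = y by apply: (@addIr _ y); rewrite e6 -e4.
have -> : x = y' by apply: (@addIr _ y); rewrite e1 Ebc.
by rewrite /P eqxx orbT.
Qed.

Lemma k4_core (y y' x u1 u2 u3 u4 u5 w1 w2 w3 w4 w5 : G) : y != y' ->
  let P z := (z == y) || (z == y') in
  P u1 -> P u2 -> P u3 -> P u4 -> P u5 -> P w1 -> P w2 -> P w3 -> P w4 -> P w5 ->
  x + y = u1 + w1 -> x + y = u2 + w2 -> x + y = u3 + w3 -> x + y = u4 + w4 ->
  x + y = u5 + w5 -> y + u1 + u1 + u2 = u1 + u3 + u4 + u5 -> P x.
Proof.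
move=> nyy' P P1 P2 P3 P4 P5 Q1 Q2 Q3 Q4 Q5 e1 e2 e3 e4 e5 e6.
have step : forall u w, P u -> P w -> x + y = u + w -> P x \/ u = y'.
  move=> u w Pu Pw e; case/orP: Pu => /eqP Eu; last by right.
  left; subst u; have -> : x = w by apply: (@addIr _ y); rewrite e addrC.
by [].
case: (step _ _ P1 Q1 e1) => // E1.
case: (step _ _ P2 Q2 e2) => // E2.
case: (step _ _ P3 Q3 e3) => // E3.
case: (step _ _ P4 Q4 e4) => // E4.
case: (step _ _ P5 Q5 e5) => // E5.
subst; move: e6; rewrite -!addrA => /addIr E.
by rewrite E eqxx in nyy'.
Qed.


Lemma sum2 (q : nat -> G) l1 l2 l3 l4 : perm_eq (l1 ++ l2) (l3 ++ l4) ->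
  \sum_(i <- l1) q i + \sum_(i <- l2) q i = \sum_(i <- l3) q i + \sum_(i <- l4) q i.
Proof. by move=> h; rewrite -!big_cat; apply: perm_big. Qed.

Lemma inF_eq (f1 f2 y : G) : f1 != f2 -> y \in [:: f1; f2] ->
  let y' := if y == f1 then f2 else f1 in
  y != y' /\ forall z, (z \in [:: f1; f2]) = (z == y) || (z == y').
Proof.
move=> nf; rewrite !inE => /orP[] /eqP ->; rewrite ?eqxx.
  by split => // z; rewrite !inE.
rewrite eq_sym (negbTE nf); split; first by rewrite eq_sym.
by move=> z; rewrite !inE orbC.
Qed.

Lemma grpP (f1 f2 : G) (q : nat -> G) : f1 != f2 ->
  (forall t, t \in patP -> t != [:: 0%N; 1%N; 2%N] -> \sum_(i <- 6%N :: t) q i \in [:: f1; f2]) ->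
  \sum_(i <- [:: 6%N; 0%N; 1%N; 2%N]) q i \in [:: f1; f2].
Proof.
move=> nf H.
have [nyy' E] := inF_eq nf (H [:: 3;4;5] erefl erefl).
rewrite E.
apply: (part_core (a := \sum_(i <- [:: 6;0;4;5]) q i) (b := \sum_(i <- [:: 6;1;3;5]) q i)
  (cc := \sum_(i <- [:: 6;2;3;4]) q i) (ab := \sum_(i <- [:: 6;0;1;5]) q i)
  (ac := \sum_(i <- [:: 6;0;2;4]) q i) (bc := \sum_(i <- [:: 6;1;2;3]) q i) nyy');
  rewrite -?E; try (apply: H; by []); rewrite -!big_cat; apply: perm_big; by [].
Qed.

Lemma grpK (f1 f2 : G) (q : nat -> G) : f1 != f2 ->
  (forall t, t \in patK -> t != [:: 0%N; 1%N; 2%N] -> \sum_(i <- 6%N :: t) q i \in [:: f1; f2]) ->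
  \sum_(i <- [:: 6%N; 0%N; 1%N; 2%N]) q i \in [:: f1; f2].
Proof.
move=> nf H.
have [nyy' E] := inF_eq nf (H [:: 3;4;5] erefl erefl).
rewrite E.
apply: (k4_core (u1 := \sum_(i <- [:: 6;0;1;5]) q i) (u2 := \sum_(i <- [:: 6;0;2;5]) q i)
  (u3 := \sum_(i <- [:: 6;0;3;5]) q i) (u4 := \sum_(i <- [:: 6;0;4;5]) q i)
  (u5 := \sum_(i <- [:: 6;1;2;5]) q i)
  (w1 := \sum_(i <- [:: 6;2;3;4]) q i) (w2 := \sum_(i <- [:: 6;1;3;4]) q i)
  (w3 := \sum_(i <- [:: 6;1;2;4]) q i) (w4 := \sum_(i <- [:: 6;1;2;3]) q i)
  (w5 := \sum_(i <- [:: 6;0;3;4]) q i) nyy');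
  rewrite -?E; try (apply: H; by []); rewrite -!big_cat; apply: perm_big; by [].
Qed.

End Grp.

Section Card.
Variables (T : finType) (M : matroid T).

Lemma bexch B1 B2 x : B1 \in bases M -> B2 \in bases M -> x \in B1 :\: B2 ->
  exists2 y, y \in B2 :\: B1 & (B1 :\ x) :|: [set y] \in bases M.
Proof. move=> h1 h2 hx; case: (basesP M) => _ H; exact: (H _ _ h1 h2 x hx). Qed.

Lemma card_exch (B1 : {set T}) x y : x \in B1 -> y \notin B1 -> #|(B1 :\ x) :|: [set y]| = #|B1|.
Proof.
move=> hx hy; rewrite setUC cardsU1 (cardsD1 x B1) hx inE negb_and hy orbT.
by rewrite add1n.
Qed.

Lemma bases_card_aux n : forall B1 B2, B1 \in bases M -> B2 \in bases M ->
  #|B1 :\: B2| <= n -> #|B1| = #|B2|.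
Proof.
elim: n => [|n IH] B1 B2 h1 h2 hn.
  have e : B1 :\: B2 = set0 by apply/eqP; rewrite -cards_eq0 -leqn0.
  have s12 : B1 \subset B2 by rewrite -setD_eq0 e.
  case: (set_0Vmem (B2 :\: B1)) => [e2|[x hx]].
    have s21 : B2 \subset B1 by rewrite -setD_eq0 e2.
    by apply/eqP; rewrite eqn_leq !subset_leq_card.
  have [y hy _] := bexch h2 h1 hx.
  by rewrite e inE in hy.
case: (set_0Vmem (B1 :\: B2)) => [e|[x hx]].
  by apply: (IH _ _ h1 h2); rewrite e cards0.
have [y hy hB] := bexch h1 h2 hx.
move: hx hy; rewrite !inE => /andP [hxB2 hxB1] /andP [hyB1 hyB2].
rewrite -(card_exch hxB1 hyB1); apply: IH => //.
have -> : (B1 :\ x :|: [set y]) :\: B2 = (B1 :\: B2) :\ x.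
  apply/setP => z; rewrite !inE.
  case: (eqVneq z y) => [->|nzy]; first by rewrite hyB2 /= ?andbF.
  by case: (z \in B1); case: (z \in B2); case: (z == x).
have hx' : x \in B1 :\: B2 by rewrite inE hxB2 hxB1.
by move: hn; rewrite (cardsD1 x (B1 :\: B2)) hx' add1n ltnS.
Qed.

Lemma bases_card B1 B2 : B1 \in bases M -> B2 \in bases M -> #|B1| = #|B2|.
Proof. by move=> h1 h2; exact: (bases_card_aux h1 h2 (leqnn _)). Qed.

End Card.


Section Core.
Variables (T : finType) (M : matroid T) (G : zmodType) (psi : T -> G) (f1 f2 : G).
Variables (B D : {set T}) (x0 : T).
Hypotheses (hB : B \in bases M) (hD : D \in bases M) (h3 : #|B :\: D| = 3).

Definition xs := enum (D :\: B).
Definition ys := enum (B :\: D).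
Definition w := xs ++ ys.
Definition io i := nth x0 w i.
Definition K := B :&: D.
Definition S (s : seq nat) := K :|: [set z | z \in map io s].
Definition pv i := if i == 6 then psiS psi K else psi (io i).
Definition bitM s := S s \in bases M.

Lemma size_ys : size ys = 3.
Proof. by rewrite /ys -cardE. Qed.
Lemma size_xs : size xs = 3.
Proof.
rewrite /xs -cardE cardsD (bases_card hD hB) setIC -cardsD; exact: h3.
Qed.
Lemma size_w : size w = 6.
Proof. by rewrite size_cat size_xs size_ys. Qed.

Lemma uniq_w : uniq w.
Proof.
rewrite cat_uniq !enum_uniq /= andbT; apply/hasPn => z.
by rewrite !mem_enum !inE => /andP [_ ->].
Qed.

Lemma io_lt3 i : i < 3 -> io i \in D :\: B.
Proof.
move=> hi; rewrite /io /w nth_cat size_xs hi -(mem_enum (D :\: B)).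
by apply: mem_nth; rewrite size_xs.
Qed.

Lemma io_ge3 i : 3 <= i < 6 -> io i \in B :\: D.
Proof.
case/andP=> h1 h2; rewrite /io /w nth_cat size_xs ltnNge h1 /= -(mem_enum (B :\: D)).
by apply: mem_nth; rewrite size_ys; rewrite ltn_subLR.
Qed.

Lemma io_notK i : i < 6 -> io i \notin K.
Proof.
move=> hi; rewrite /K !inE; case: (ltnP i 3) => h.
  by move: (io_lt3 h); rewrite !inE => /andP [/negbTE -> _].
have := io_ge3 (i:=i); rewrite h hi => /(_ isT); rewrite !inE => /andP [/negbTE -> _].
by rewrite andbF.
Qed.

Lemma io_inj i j : i < 6 -> j < 6 -> io i = io j -> i = j.
Proof.
move=> hi hj e; apply/eqP; rewrite -(nth_uniq x0 _ _ uniq_w) ?size_w //.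
by apply/eqP.
Qed.

Lemma mem_io s j : all (fun i => i < 6) s -> j < 6 -> (io j \in map io s) = (j \in s).
Proof.
move=> /allP hs hj; apply/mapP/idP => [[k hk e]|h]; last by exists j.
by rewrite (io_inj hj (hs _ hk) e).
Qed.


Lemma map_io012 : map io [:: 0; 1; 2] = xs.
Proof. by rewrite (_ : [:: 0; 1; 2] = iota 0 3) // /io map_nth_iota0 ?size_w // take_size_cat ?size_xs. Qed.

Lemma map_io345 : map io [:: 3; 4; 5] = ys.
Proof.
rewrite (_ : [:: 3; 4; 5] = iota 3 3) // /io map_nth_iota ?size_w //.
by rewrite drop_size_cat ?size_xs // take_oversize // size_ys.
Qed.

Lemma S012 : S [:: 0; 1; 2] = D.
Proof.
apply/setP => z; rewrite /S map_io012 /K !inE mem_enum !inE.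
by case: (z \in B); case: (z \in D).
Qed.

Lemma S345 : S [:: 3; 4; 5] = B.
Proof.
apply/setP => z; rewrite /S map_io345 /K !inE mem_enum !inE.
by case: (z \in B); case: (z \in D).
Qed.

Lemma psiS_S s : uniq s -> all (fun i => i < 6) s -> psiS psi (S s) = (\sum_(i <- 6%N :: s) pv i)%R.
Proof.
move=> us /allP hs.
rewrite big_cons /pv eqxx /psiS /S.
rewrite (eq_bigl [predU K & [set z | z \in map io s]]); last by move=> z; rewrite !inE.
rewrite bigU; last first.
  apply/pred0P => z /=; rewrite !inE; apply/negP => /andP [hK /mapP [i hi ez]].
  by move: (io_notK (hs _ hi)); rewrite -ez /K inE hK.
congr (_ + _)%R.
have uio : uniq (map io s).
  by rewrite (map_inj_in_uniq (f := io)) // => i j hi hj; apply: io_inj; apply: hs.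
rewrite (eq_bigl (mem (map io s))); last by move=> z; rewrite !inE.
rewrite -big_uniq // big_map; apply: eq_big_seq => i hi.
by rewrite ifN_eq // neq_ltn hs.
Qed.

Lemma S_exch t1 x y : uniq t1 -> all (fun i => i < 6) t1 -> x \in t1 -> y < 6 -> y \notin t1 ->
  S (exch t1 x y) = S t1 :\ io x :|: [set io y].
Proof.
move=> u1 a1 hx hy hyt; have /allP a1' := a1.
have hx6 : x < 6 by apply: a1'.
apply/setP => z; rewrite /S /exch !inE.
have ps : perm_eq (sort leq (rcons (rem x t1) y)) (rcons (rem x t1) y).
  by rewrite perm_sort perm_refl.
rewrite (perm_mem (perm_map io ps)) map_rcons mem_rcons inE.
have -> : (z \in map io (rem x t1)) = (z \in map io t1) && (z != io x).
  rewrite rem_filter //; apply/mapP/andP => [[i hi ->]|[/mapP [i hi ->] hne]].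
    move: hi; rewrite mem_filter => /andP [/= hix hi]; split; first by apply: map_f.
    by apply/negP => /eqP /(io_inj (a1' _ hi) hx6) /eqP; rewrite (negbTE hix).
  exists i => //; rewrite mem_filter hi andbT /=.
  by apply/negP => /eqP eix; move: hne; rewrite eix eqxx.
case hK: (z \in K).
  have -> : z != io x by apply/negP => /eqP ezx; move: (io_notK hx6); rewrite -ezx hK.
  by move: hK; rewrite /K inE => ->.
move: hK; rewrite /K inE => ->.
by rewrite /= orbC andbC.
Qed.

Lemma exch_sem t1 t2 x : uniq t1 -> all (fun i => i < 6) t1 -> all (fun i => i < 6) t2 ->
  x \in t1 -> x \notin t2 -> bitM t1 -> bitM t2 ->
  exists2 y, (y \in t2) && (y \notin t1) & bitM (exch t1 x y).
Proof.
move=> u1 a1 a2 hx hxt2 b1 b2.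
have /allP a1' := a1; have /allP a2' := a2.
have hx6 : x < 6 by apply: a1'.
have hxS : io x \in S t1 :\: S t2.
  rewrite /S !inE (mem_io a1 hx6) (mem_io a2 hx6) hx (negbTE hxt2) orbT andbT orbF.
  by move: (io_notK hx6); rewrite /K inE.
have [z hz hb] := bexch b1 b2 hxS.
move: hz; rewrite /S !inE negb_or => /andP [/andP [hzK hzt1] /orP [hzK'|]].
  by rewrite hzK' in hzK.
case/mapP => y hy ez; subst z.
have hy6 : y < 6 by apply: a2'.
exists y; first by rewrite hy -(mem_io a1 hy6) hzt1.
rewrite /bitM S_exch //; last by rewrite -(mem_io a1 hy6).
Qed.

Lemma near_S s : all (fun i => i < 6) s -> has (fun j => 3 <= j) s -> #|B :\: S s| <= 2.
Proof.
move=> a /hasP [j hj h3j]; have /allP a' := a.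
have hj6 : j < 6 by apply: a'.
have hjB : io j \in B :\: D by apply: io_ge3; rewrite h3j hj6.
have hsub : B :\: S s \subset (B :\: D) :\ io j.
  apply/subsetP => z; rewrite /S /K !inE negb_or => /andP [/andP [hBD hzs] hzB].
  rewrite hzB andbT; move: hBD; rewrite hzB /= => -> ; rewrite andbT.
  by apply/negP => /eqP ez; move: hzs; rewrite ez map_f.
apply: (leq_trans (subset_leq_card hsub)).
by move: h3; rewrite (cardsD1 (io j)) hjB add1n => -[->].
Qed.

End Core.

Lemma trip_ok : all (fun t => uniq t && all (fun i => i < 6) t) trip.
Proof. by []. Qed.

Lemma exch_in : all (fun t1 => all (fun t2 => all (fun x => all (fun y => exch t1 x y \in trip)
  [seq y <- t2 | y \notin t1]) [seq x <- t1 | x \notin t2]) trip) trip.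
Proof. by vm_compute. Qed.

Lemma rels_ok : all (fun r => [&& nth 0 r 6 == 6,
  perm_eq (map (nth 0 r) [:: 6; 0; 1; 2]) [:: 6; 0; 1; 2] &
  all (fun t => (relab r t \in trip) && ((t == [:: 0; 1; 2]) || (relab r t != [:: 0; 1; 2])))
    (patP ++ patK)]) rels.
Proof. by vm_compute. Qed.

Lemma trip_has3 : all (fun s => (s == [:: 0; 1; 2]) || has (fun j => 3 <= j) s) trip.
Proof. by []. Qed.

Lemma core_false (T : finType) (M : matroid T) (G : zmodType) (psi : T -> G) (f1 f2 : G) B D :
  f1 != f2 -> B \in bases M -> D \in bases M -> psiS psi D \notin [:: f1; f2] -> #|B :\: D| = 3 ->
  (forall E, E \in bases M -> #|B :\: E| <= 2 -> psiS psi E \in [:: f1; f2]) -> False.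
Proof.
move=> nf hB hD hav h3 H.
have /card_gt0P [x0 _] : 0 < #|B :\: D| by rewrite h3.
pose bv := map (bitM M B D x0) trip.
have Hin : forall s, s \in trip -> lk bv (index s trip) = bitM M B D x0 s.
  by move=> s hs; rewrite /lk /bv (nth_map [::]) ?index_mem // nth_index.
have tripP : forall t, t \in trip -> uniq t /\ all (fun i => i < 6) t.
  by move=> t ht; have /andP [] := allP trip_ok t ht.
have Hok : okB2 cslit bv.
  rewrite -genc_lit; apply: okB2_spec => c.
  case/flatten_mapP => t1 ht1 /flatten_mapP [t2 ht2] /mapP [x hx ->] /=.
  move: (hx); rewrite mem_filter => /andP [hxt2 hxt1].
  rewrite !Hin // => b1 b2.
  have [u1 a1] := tripP _ ht1; have [_ a2] := tripP _ ht2.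
  have [y /andP [hyt2 hyt1] hb] := exch_sem hB hD h3 u1 a1 a2 hxt1 hxt2 b1 b2.
  have hyf : y \in [seq y <- t2 | y \notin t1] by rewrite mem_filter hyt1 hyt2.
  apply/hasP; exists (index (exch t1 x y) trip); first by apply/mapP; exists y.
  have hin : exch t1 x y \in trip.
    move/allP: exch_in => /(_ t1 ht1) /allP /(_ t2 ht2) /allP /(_ x hx) /allP.
    by apply.
  by rewrite Hin.
have h0 : lk bv 0.
  by change (lk bv (index [:: 0; 1; 2] trip)); rewrite Hin // /bitM (S012 x0 hB hD h3).
have h19 : lk bv 19.
  by change (lk bv (index [:: 3; 4; 5] trip)); rewrite Hin // /bitM (S345 x0 hB hD h3).
have sb : size bv = 20 by rewrite size_map.
have [p hp hall] := brute sb h0 h19 Hok.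
have branch : forall pat,
  (forall q : nat -> G, (forall t, t \in pat -> t != [:: 0%N; 1%N; 2%N] ->
     (\sum_(i <- 6%N :: t) q i)%R \in [:: f1; f2]) ->
     (\sum_(i <- [:: 6%N; 0%N; 1%N; 2%N]) q i)%R \in [:: f1; f2]) ->
  {subset pat <= patP ++ patK} -> forall r, r \in rels ->
  all (lk bv) [seq index (relab r t) trip | t <- pat] -> False.
  move=> pat Hg sub r hr hall'.
  have /and3P [/eqP r6 rperm /allP rpat] := allP rels_ok r hr.
  apply: (negP hav).
  rewrite -(S012 x0 hB hD h3) (psiS_S psi x0 hB hD h3) //.
  rewrite -(perm_big _ rperm) big_map.
  apply: Hg => t ht htX.
  have /andP [hrin hrX] := rpat t (sub t ht).
  rewrite -(big_map (nth 0 r) xpredT (pv psi B D x0)).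
  have pe : perm_eq (map (nth 0 r) (6%N :: t)) (6%N :: relab r t).
    by rewrite /= r6 perm_cons /relab perm_sym perm_sort perm_refl.
  rewrite (perm_big _ pe).
  have [u a] := tripP _ hrin.
  rewrite -(psiS_S psi x0 hB hD h3 u a).
  apply: H.
    rewrite -/(bitM M B D x0 (relab r t)) -Hin //.
    by apply: (allP hall'); apply: map_f.
  apply: (near_S x0 hB hD h3) => //.
  have := allP trip_has3 _ hrin; rewrite (negbTE htX) /= in hrX.
  move=> /orP [e|//]; move: hrX; by rewrite (eqP e) eqxx.
move: hp hall; rewrite gpl_eq /gpats mem_cat => /orP [] /mapP [r hr ->] hall.
  by apply: (branch patP (@grpP G f1 f2 ^~ nf) _ r hr hall) => t ht; rewrite mem_cat ht.
by apply: (branch patK (@grpK G f1 f2 ^~ nf) _ r hr hall) => t ht; rewrite mem_cat ht orbT.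
Qed.

Lemma near_ind (T : finType) (M : matroid T) (G : zmodType) (psi : T -> G) (f1 f2 : G) :
  f1 != f2 -> forall n B C, B \in bases M -> C \in bases M -> F_avoiding psi [:: f1; f2] C ->
  #|B :\: C| <= n ->
  exists Bs, [/\ Bs \in bases M, F_avoiding psi [:: f1; f2] Bs & #|B :\: Bs| <= 2].
Proof.
move=> nf; elim=> [|n IH] B C hB hC hav hn.
  by exists C; split => //; apply: leq_trans hn _.
case: (leqP #|B :\: C| 2) => h2; first by exists C.
have /card_gt0P [y hy] : 0 < #|B :\: C| by apply: leq_ltn_trans h2.
have [x hx hB'] := bexch hB hC hy.
have hxC : x \in C by move: hx; rewrite inE => /andP [].
have hyB : y \in B by move: hy; rewrite inE => /andP [].
have hn' : #|(B :\ y :|: [set x]) :\: C| <= n.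
  have -> : (B :\ y :|: [set x]) :\: C = (B :\: C) :\ y.
    apply/setP => z; rewrite !inE.
    case: (eqVneq z x) => [->|_]; first by rewrite hxC /= !andbF.
    by rewrite orbF; case: (z \in B); case: (z \in C); case: (z == y).
  by move: hn; rewrite (cardsD1 y (B :\: C)) hy add1n ltnS.
have [D [hD hDav hD2]] := IH _ _ hB' hC hav hn'.
case: (leqP #|B :\: D| 2) => h2'; first by exists D.
have h3 : #|B :\: D| = 3.
  apply/eqP; rewrite eqn_leq h2' andbT.
  have sub : B :\: D \subset y |: ((B :\ y :|: [set x]) :\: D).
    apply/subsetP => z; rewrite !inE.
    by case: (z \in B); case: (z \in D); case: (z == y); case: (z == x).
  apply: (leq_trans (subset_leq_card sub)).
  rewrite cardsU1; apply: (leq_trans (leq_add (leq_b1 _) hD2)).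
  by [].
case: (boolP [exists E : {set T}, [&& E \in bases M, F_avoiding psi [:: f1; f2] E & #|B :\: E| <= 2]]).
  by case/existsP => E /and3P [h1 h2'' h3']; exists E.
move=> hne; exfalso.
apply: (core_false nf hB hD hDav h3) => E hE hE2.
apply/negPn/negP => hEav; move/negP: hne; apply.
by apply/existsP; exists E; rewrite hE hE2 andbT; exact: hEav.
Qed.

Theorem theorem5p33 (T : finType) (G : zmodType) (M : matroid T)
  (psi : T -> G) (F : seq G) :
  uniq F -> size F = 2 ->
  (exists B0, B0 \in bases M /\ F_avoiding psi F B0) ->
  forall B, B \in bases M ->
    exists Bs, [/\ Bs \in bases M, F_avoiding psi F Bs & #|B :\: Bs| <= 2].
Proof.
move=> uF sF [B0 [hB0 hav0]] B hB.
case: F uF sF hav0 => [|f1 [|f2 [|? ?]]] //= uF _ hav0.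
have nf : f1 != f2 by move: uF; rewrite inE andbT.
exact: (near_ind nf hB hB0 hav0 (leqnn _)).
Qed.
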